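(* Let $p$ be a prime number and let $x,y,z\in\mathbb{N}$ with $x\le y\le z$ satisfy $\frac{4}{p}=\frac{1}{x}+\frac{1}{y}+\frac{1}{z}$. Suppose the solution is of Type I, i.e. $\gcd(x,p)=1$, $\gcd(y,p)=1$ and $\gcd(z,p)=p$. Then $$x=\left\lceil \frac{yp}{4y-p}\right\rceil.$$
   Context: $\mathbb{N}$ denotes the positive integers; $\lceil\cdot\rceil$ is the ceiling function. *)

(* Defs.v *)
From mathcomp Require Import all_boot all_order all_algebra.
Set Implicit Arguments. Unset Strict Implicit. Unset Printing Implicit Defensive.

(* Main.v *)
Require Import Defs.
From mathcomp Require Import all_boot all_order all_algebra.
From mathcomp Require Import zify ring lra.
Import Order.TTheory GRing.Theory Num.Theory.
Lemma a2 (p x y c k : nat) : (0 < p)%N -> (4*x*y*c = c*(x+y)* p + x*y)%N -> (4*c-1 = k* p)%N -> (x*y*k = c*(x+y))%N.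
Proof. move=> p0 E2 hk.
apply/eqP; rewrite -(eqn_pmul2r p0); apply/eqP.
rewrite -mulnA -hk mulnBr muln1. 
have -> : (x * y * (4 * c) = 4*x*y*c)%N by ring.
rewrite E2. lia. Qed.
Lemma a3 (x y c k : nat) : (0 < y)%N -> (x <= y)%N -> (x*y*k = c*(x+y))%N -> (x*k <= 2*c)%N.
Proof. move=> y0 xy E.
rewrite -(leq_pmul2l y0).
have -> : (y * (x*k) = x*y*k)%N by ring.
rewrite E. have : (c * (x+y) <= c*(y+y))%N by rewrite leq_mul2l leq_add2r xy orbT.
lia. Qed.
Lemma a4 (p x c k : nat) : (0<k)%N -> (0 < c)%N -> (4*c-1 = k* p)%N -> (x*k <= 2*c)%N -> (2*x <= p+1)%N.
Proof. move=> k0 c0 hk h. 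
have h' : (2*x*k <= k* p + 1)%N by lia.
case: (leqP (2*x) (p+1)) => // H.
have : (k * (p+2) <= k*(2*x))%N by rewrite leq_mul2l; apply/orP; right; lia.
lia. Qed.
Lemma a5 (p x c k : nat) : (0<k)%N -> (0 < x)%N -> (2*x <= p+1)%N -> (x*k <= 2*c)%N -> (x*(x-1) < c* p)%N.
Proof. move=> k0 x0 h2 h1.
have h3 : (x <= 2*c)%N. apply: leq_trans h1. by rewrite leq_pmulr.
have : (x * (2*x - 1) <= (2*c) * p)%N. apply: leq_mul => //. lia.
nia. Qed.

Lemma natpart (p x y z : nat) :
  prime p -> (0 < x)%N -> (x <= y)%N -> (y <= z)%N ->
  (4*x*y*z = p*(y*z+x*z+x*y))%N ->
  gcdn x p = 1%N -> gcdn y p = 1%N -> gcdn z p = p ->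
  (x*(x-1) < z)%N.
Proof.
move=> pp x0 xy yz E gx gy gz.
have p0 : (0 < p)%N by apply: prime_gt0.
have y0 : (0 < y)%N by apply: leq_trans xy.
have /dvdnP [c zc] : (p %| z)%N by rewrite -gz dvdn_gcdl.
subst z.
have E2 : (4*x*y*c = c*(x+y)* p + x*y)%N.
  apply/eqP; rewrite -(eqn_pmul2r p0); apply/eqP.
  have -> : (4 * x * y * c * p = 4*x*y*(c* p))%N by ring.
  rewrite E; ring.
have c0 : (0 < c)%N.
  by move: (leq_trans y0 yz); rewrite muln_gt0 => /andP[].
have hd : (p %| x*y*(4*c-1))%N.
  have -> : (x*y*(4*c-1) = c*(x+y)* p)%N.
    rewrite mulnBr muln1. have -> : (x * y * (4 * c) = 4*x*y*c)%N by ring.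
    rewrite E2; lia.
  by rewrite dvdn_mull.
have cop : coprime p (x*y).
  by rewrite coprimeMr /coprime gcdnC gx gcdnC gy.
have /dvdnP [k hk] : (p %| 4*c-1)%N.
  by move: hd; rewrite mulnC (Gauss_dvdl _ cop).
have k0 : (0<k)%N by case: k hk => //; lia.
have E3 := a2 _ _ _ _ _ p0 E2 hk.
have h1 := a3 _ _ _ _ y0 xy E3.
have h2 := a4 _ _ _ _ k0 c0 hk h1.
exact: a5 _ _ _ _ k0 x0 h2 h1.
Qed.

Local Open Scope ring_scope.

Theorem theorem2 (p x y z : nat) :
  prime p -> (0 < x)%N -> (x <= y)%N -> (y <= z)%N ->
  4%:R / p%:R = 1 / x%:R + 1 / y%:R + 1 / z%:R :> rat ->
  gcdn x p = 1%N -> gcdn y p = 1%N -> gcdn z p = p ->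
  x%:Z = Num.ceil ((y * p)%:R / (4 * y%:Z - p%:Z)%:~R : rat).
Proof.
move=> pp x0 xy yz H gx gy gz.
have p0 : (0 < p)%N by apply: prime_gt0.
have y0 : (0 < y)%N by apply: leq_trans xy.
have z0 : (0 < z)%N by apply: leq_trans yz.
have px : (p%:R : rat) != 0 by rewrite pnatr_eq0 -lt0n.
have xx : (x%:R : rat) != 0 by rewrite pnatr_eq0 -lt0n.
have yx : (y%:R : rat) != 0 by rewrite pnatr_eq0 -lt0n.
have zx : (z%:R : rat) != 0 by rewrite pnatr_eq0 -lt0n.
have E : (4*x*y*z = p*(y*z+x*z+x*y))%N.
  apply/eqP; rewrite -(eqr_nat rat) !natrM !natrD !natrM.
  rewrite -subr_eq0.
  have -> : 4%:R * x%:R * y%:R * z%:R - p%:R * (y%:R * z%:R + x%:R * z%:R + x%:R * y%:R)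
     = p%:R * x%:R * y%:R * z%:R * (4%:R / p%:R - (1 / x%:R + 1 / y%:R + 1 / z%:R)) :> rat.
    by field; rewrite px xx yx zx.
  by rewrite H subrr mulr0.
have Z := @natpart p x y z pp x0 xy yz E gx gy gz.
have I1 : (p*(x+y) < 4*x*y)%N.
  rewrite -(ltn_pmul2l z0).
  have : (0 < p*x*y)%N by rewrite !muln_gt0 p0 x0 y0.
  lia.
have S1 : (p*x*y + p*z < 4*y*z)%N.
  rewrite -(ltn_pmul2l x0).
  have : (p*y*(x*x) < p*y*(z+x))%N.
    by rewrite ltn_pmul2l ?muln_gt0 ?p0 ?y0 //; move: Z; rewrite mulnBr muln1; lia.
  lia.
have I2 : (4*x*y + p < x* p + y* p + 4*y)%N.
  rewrite -(ltn_pmul2l z0). lia.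
have I0 : (p < 4*y)%N by nia.
symmetry; apply: ceil_def.
have D0 : (0 : rat) < (4 * y%:Z - p%:Z)%:~R by rewrite ltr0z; lia.
rewrite ltr_pdivlMr // ler_pdivrMr //.
have -> : ((y * p)%:R : rat) = ((y* p)%:Z)%:~R by [].
rewrite -!intrM ltr_int ler_int.
apply/andP; split; lia.
Qed.
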